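(* There is a universal constant $c$ such that for every sufficiently large integer $N$ there are $N$ points $x_1,\dots,x_N$ on $\mathbb{S}^2$ such that for every unit vector $v\in\mathbb{S}^2$, at most $c\frac{\ln N}{\ln\ln N}$ of the points $x_i$ lie in the strip $\{x\in\mathbb{S}^2:|\langle v,x\rangle|\le\frac1N\}$.
   Context: $\mathbb{S}^2=\{x\in\mathbb{R}^3:|x|=1\}$. *)

(* Defs.v *)
From Stdlib Require Import Reals List.
Import ListNotations.
Open Scope R_scope.

Definition R3 : Type := (R * R * R)%type.

Definition dot3 (u v : R3) : R :=
  let '(u1, u2, u3) := u in
  let '(v1, v2, v3) := v in
  u1 * v1 + u2 * v2 + u3 * v3.

Definition on_sphere (x : R3) : Prop := sqrt (dot3 x x) = 1.

Definition strip_count (N : nat) (x : nat -> R3) (v : R3) : nat :=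
  length (filter (fun i => if Rle_dec (Rabs (dot3 v (x i))) (/ INR N)
                           then true else false) (seq 0 N)).

(* Main.v *)
Require Import Defs.
From Stdlib Require Import Reals List.
Open Scope R_scope.
From Stdlib Require Import Lia Lra Psatz ZArith Bool Arith.
Import ListNotations.

Module CombM.
Local Open Scope nat_scope.
Local Open Scope bool_scope.

Fixpoint tuples {A} (G : list A) (N : nat) : list (list A) :=
  match N with
  | 0 => [[]]
  | S N' => flat_map (fun x => map (cons x) (tuples G N')) G
  end.

Definition cnt {A} (p : A -> bool) (l : list A) : nat := length (filter p l).

Definition sumf {A} (h : A -> nat) (l : list A) : nat :=
  fold_right (fun x acc => h x + acc) 0 l.

Lemma cnt_app {A} (p : A -> bool) l1 l2 : cnt p (l1 ++ l2) = cnt p l1 + cnt p l2.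
Proof. unfold cnt; rewrite filter_app, length_app; lia. Qed.

Lemma cnt_map {A B} (p : B -> bool) (g : A -> B) l :
  cnt p (map g l) = cnt (fun x => p (g x)) l.
Proof. induction l; simpl; auto. unfold cnt in *; simpl. destruct (p (g a)); simpl; lia. Qed.

Lemma cnt_flat {A B} (p : B -> bool) (h : A -> list B) G :
  cnt p (flat_map h G) = sumf (fun x => cnt p (h x)) G.
Proof. induction G; simpl; auto. rewrite cnt_app; lia. Qed.

Lemma cnt_le {A} (p : A -> bool) l : cnt p l <= length l.
Proof. unfold cnt. apply filter_length_le. Qed.

Lemma length_flat {A B} (h : A -> list B) G :
  length (flat_map h G) = sumf (fun x => length (h x)) G.
Proof. induction G; simpl; auto. rewrite length_app; lia. Qed.

Lemma sumf_const {A} c (l : list A) : sumf (fun _ => c) l = length l * c.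
Proof. induction l; simpl; lia. Qed.

Lemma sumf_le {A} (h1 h2 : A -> nat) l : (forall x, In x l -> h1 x <= h2 x) -> sumf h1 l <= sumf h2 l.
Proof. induction l; simpl; intros H; auto. specialize (H a (or_introl eq_refl)) as H1.
  assert (sumf h1 l <= sumf h2 l) by (apply IHl; auto). lia. Qed.

Lemma sumf_bound {A} (h : A -> nat) l c : (forall x, In x l -> h x <= c) -> sumf h l <= length l * c.
Proof. intros H. rewrite <- sumf_const. apply sumf_le; auto. Qed.





Lemma sumf_ext {A} (h1 h2 : A -> nat) l : (forall x, h1 x = h2 x) -> sumf h1 l = sumf h2 l.
Proof. intros H; induction l; simpl; auto. Qed.

Lemma tuples_length {A} (G : list A) N : length (tuples G N) = length G ^ N.
Proof. induction N; simpl; auto. rewrite length_flat.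
  rewrite (sumf_ext _ (fun _ => length G ^ N)). 2:{ intros; rewrite length_map; auto. }
  rewrite sumf_const. lia. Qed.

Lemma tuples_in {A} (G : list A) N f : In f (tuples G N) -> length f = N /\ forall y, In y f -> In y G.
Proof. revert f; induction N; simpl; intros f H.
  - destruct H as [H|[]]; subst; simpl; split; auto; tauto.
  - apply in_flat_map in H as [x [Hx Hf]]. apply in_map_iff in Hf as [f' [<- Hf']].
    apply IHN in Hf' as [Hl Hy]. simpl; split; [lia|]. intros y [->|Hy']; auto. Qed.

Lemma bern N k : (k+1) * N^k + N^(k+1) <= (N+1)^(k+1).
Proof. induction k.
  - simpl; lia.
  - assert (N^(k+1) <= (N+1)^(k+1)) by (apply Nat.pow_le_mono_l; lia).
    replace (S k + 1) with (S (k+1)) by lia. rewrite !Nat.pow_succ_r'.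
    replace (S k) with (k+1) by lia. rewrite Nat.pow_add_r in *. simpl in *. nia. Qed.

Lemma sumf_if {A} (P : A -> bool) a b l :
  sumf (fun x => if P x then a else b) l <= cnt P l * a + length l * b.
Proof. induction l; simpl; auto. unfold cnt in *; simpl. destruct (P a0); simpl; lia. Qed.

Definition Bad {A} (G : list A) (P : A -> bool) N k :=
  cnt (fun f => k <=? cnt P f) (tuples G N).

Lemma key {A} (G : list A) (P : A -> bool) N k :
  Bad G P N k * length G ^ k * fact k <= N^k * cnt P G ^ k * length G ^ N.
Proof.
  set (g := length G). set (s := cnt P G).
  revert k; induction N; intros k.
  - unfold Bad; simpl. destruct k; simpl; unfold cnt; simpl; lia.
  - destruct k.
    + unfold Bad. simpl. pose proof (cnt_le (fun f => 0 <=? cnt P f) (tuples G (S N))).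
      rewrite tuples_length in H. fold g in H. simpl in H. lia.
    + assert (HB : Bad G P (S N) (S k) <= s * Bad G P N k + g * Bad G P N (S k)).
      { unfold Bad. simpl tuples. rewrite cnt_flat.
        rewrite (sumf_ext _ (fun x => if P x then cnt (fun f => k <=? cnt P f) (tuples G N)
                                      else cnt (fun f => S k <=? cnt P f) (tuples G N))).
        - rewrite sumf_if. fold g. fold s. lia.
        - intros x. rewrite cnt_map. unfold cnt at 2 4. simpl.
          destruct (P x); simpl; f_equal; apply filter_ext; intros f; unfold cnt; simpl; destruct (P x) eqn:E; simpl; auto; discriminate. }
      specialize (IHN k) as H1. specialize (IHN (S k)) as H2.
      pose proof (bern N k) as Hb.
      replace (k+1) with (S k) in Hb by lia.
      simpl fact. rewrite !Nat.pow_succ_r' in *.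
      set (B1 := Bad G P N k) in *. set (B2 := Bad G P N (S k)) in *.
      set (B := Bad G P (S N) (S k)) in *.
      set (Nk := N^k) in *. set (sk := s^k) in *. set (gk := g^k) in *. set (gN := g^N) in *.
      set (F := fact k) in *.
      change (fact (S k)) with (S k * F) in H2.
      replace (F + k * F) with (S k * F) by lia.
      apply Nat.le_trans with ((s * B1 + g * B2) * (g * gk) * (S k * F)).
      { apply Nat.mul_le_mono_r. apply Nat.mul_le_mono_r. exact HB. }
      replace ((s * B1 + g * B2) * (g * gk) * (S k * F)) with
        (s * g * S k * (B1 * gk * F) + g * (B2 * (g * gk) * (S k * F))) by ring.
      apply Nat.le_trans with (s * g * S k * (Nk * sk * gN) + g * (N * Nk * (s * sk) * gN)).
      { apply Nat.add_le_mono; apply Nat.mul_le_mono_l; assumption. }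
      replace (s * g * S k * (Nk * sk * gN) + g * (N * Nk * (s * sk) * gN)) with
        ((s*sk)*(g*gN)*(S k * Nk + N * Nk)) by ring.
      replace (S N * S N ^ k * (s * sk) * (g * gN)) with ((s*sk)*(g*gN)*((N+1)*(N+1)^k)).
      2:{ replace (S N) with (N+1) by lia. ring. }
      apply Nat.mul_le_mono_l. exact Hb.
Qed.


Lemma cnt_or {A} (p q : A -> bool) l : cnt (fun x => p x || q x) l <= cnt p l + cnt q l.
Proof. induction l; simpl; auto. unfold cnt in *; simpl. destruct (p a), (q a); simpl; lia. Qed.

Lemma cnt_sumf {A} (p : A -> bool) l : cnt p l = sumf (fun x => if p x then 1 else 0) l.
Proof. induction l; simpl; auto. unfold cnt in *; simpl. destruct (p a); simpl; lia. Qed.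

Lemma sumf_add {A} (h1 h2 : A -> nat) l : sumf (fun x => h1 x + h2 x) l = sumf h1 l + sumf h2 l.
Proof. induction l; simpl; lia. Qed.

Lemma cnt_prod {A B} (p : A * B -> bool) l1 l2 :
  cnt p (list_prod l1 l2) = sumf (fun a => cnt (fun b => p (a,b)) l2) l1.
Proof. induction l1; simpl; auto. rewrite cnt_app, cnt_map, IHl1. auto. Qed.

Lemma fubini {A B} (h : A -> B -> nat) l1 l2 :
  sumf (fun a => sumf (fun b => h a b) l2) l1 = sumf (fun b => sumf (fun a => h a b) l1) l2.
Proof. induction l1; simpl.
  - induction l2; simpl; auto.
  - rewrite IHl1. rewrite <- sumf_add. auto. Qed.

Lemma cnt_prod_swap {A B} (p : A * B -> bool) l1 l2 :
  cnt p (list_prod l1 l2) = sumf (fun b => cnt (fun a => p (a,b)) l1) l2.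
Proof. rewrite cnt_prod. rewrite (sumf_ext _ (fun a => sumf (fun b => if p (a,b) then 1 else 0) l2)).
  2:{ intros; apply cnt_sumf. } rewrite fubini. apply sumf_ext. intros; symmetry; apply cnt_sumf. Qed.

Lemma window (p : nat -> bool) n (lo : Z) W :
  (forall b, p b = true -> (lo <= Z.of_nat b <= lo + Z.of_nat W)%Z) -> cnt p (seq 0 n) <= S W.
Proof. intros H. unfold cnt.
  replace (S W) with (length (seq (Z.to_nat lo) (S W))) by apply length_seq.
  apply NoDup_incl_length. apply NoDup_filter, seq_NoDup.
  intros b Hb. apply filter_In in Hb as [_ Hb]. apply H in Hb. apply in_seq. lia. Qed.

Definition zn := Z.of_nat.

Definition Ta (P Q R : nat * nat) : bool :=
  let '(aP,bP) := P in let '(aQ,bQ) := Q in let '(aR,bR) := R in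
  (aP <=? aR) && (aR <=? aQ) &&
  (Z.abs ((zn aR - zn aP)*(zn bQ - zn bP) - (zn bR - zn bP)*(zn aQ - zn aP)) <=? 32*(zn aQ - zn aP))%Z &&
  (if aQ =? aP then (Z.abs (zn bR - zn bP) <=? 16)%Z else true).

Definition swp (P : nat * nat) : nat * nat := (snd P, fst P).
Definition Tb P Q R := Ta (swp P) (swp Q) (swp R).
Definition TT P Q R := Ta P Q R || Tb P Q R.
Definition eqp (P R : nat * nat) := (fst P =? fst R) && (snd P =? snd R).
Definition Gr n := list_prod (seq 0 n) (seq 0 n).

Lemma Ta_col P Q a n : cnt (fun b => Ta P Q (a,b)) (seq 0 n) <= 65.
Proof. destruct P as [aP bP], Q as [aQ bQ].
  destruct (aQ =? aP) eqn:E.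
  - apply Nat.le_trans with 33; [|lia]. apply (window _ _ (zn bP - 16)%Z 32).
    intros b Hb. unfold Ta in Hb. rewrite E in Hb. apply andb_prop in Hb as [_ Hb].
    apply Z.leb_le in Hb. unfold zn in *. lia.
  - set (d := (zn aQ - zn aP)%Z). set (c := ((zn a - zn aP)*(zn bQ - zn bP) + zn bP * d)%Z).
    apply (window _ _ ((c - 32*d)/d)%Z 64).
    intros b Hb. unfold Ta in Hb. rewrite E in Hb.
    apply andb_prop in Hb as [Hb _]. apply andb_prop in Hb as [Hb H3].
    apply andb_prop in Hb as [H1 H2]. apply Nat.leb_le in H1, H2. apply Z.leb_le in H3.
    apply Nat.eqb_neq in E.
    assert (Hd : (0 < d)%Z) by (unfold d, zn; lia).
    pose proof (Z.div_mod (c - 32*d) d ltac:(lia)) as Hdm.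
    pose proof (Z.mod_pos_bound (c - 32*d) d Hd) as Hmb.
    set (q := ((c - 32*d)/d)%Z) in *. set (r := ((c - 32 * d) mod d)%Z) in *.
    assert (Hc : (Z.abs (c - zn b * d) <= 32 * d)%Z).
    { unfold c. replace (zn a - zn aP)%Z with ((zn a - zn aP))%Z by auto.
      replace ((zn a - zn aP) * (zn bQ - zn bP) + zn bP * d - zn b * d)%Z with
        ((zn a - zn aP) * (zn bQ - zn bP) - (zn b - zn bP) * d)%Z by ring. exact H3. }
    clearbody c d q r. change (zn b) with (Z.of_nat b) in Hc.
    split; nia.
Qed.

Lemma Ta_cnt P Q n : cnt (Ta P Q) (Gr n) <= n * 65.
Proof. unfold Gr. rewrite cnt_prod. rewrite (sumf_bound _ _ 65).
  - rewrite length_seq; lia.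
  - intros; apply Ta_col. Qed.

Lemma Tb_cnt P Q n : cnt (Tb P Q) (Gr n) <= n * 65.
Proof. unfold Gr. rewrite cnt_prod_swap. rewrite (sumf_bound _ _ 65).
  - rewrite length_seq; lia.
  - intros b _. unfold Tb. apply (Ta_col (swp P) (swp Q) b n). Qed.

Lemma TT_cnt P Q n : cnt (TT P Q) (Gr n) <= 130 * n.
Proof. unfold TT. pose proof (cnt_or (Ta P Q) (Tb P Q) (Gr n)).
  pose proof (Ta_cnt P Q n). pose proof (Tb_cnt P Q n). lia. Qed.

Lemma eqp_cnt P n : cnt (eqp P) (Gr n) <= 1.
Proof. unfold Gr. rewrite cnt_prod. destruct P as [aP bP].
  rewrite (sumf_le _ (fun a => if a =? aP then 1 else 0)).
  - rewrite <- cnt_sumf. apply (window _ _ (zn aP) 0). intros b Hb. apply Nat.eqb_eq in Hb. unfold zn; lia.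
  - intros a _. destruct (a =? aP) eqn:E.
    + apply (window _ _ (zn bP) 0). intros b Hb. unfold eqp in Hb. simpl in Hb.
      apply andb_prop in Hb as [_ Hb]. apply Nat.eqb_eq in Hb. unfold zn; lia.
    + unfold cnt. rewrite (filter_ext_in _ (fun _ => false)). 
      * clear. induction (seq 0 n); simpl; auto.
      * intros b _. unfold eqp; simpl. apply Nat.eqb_neq in E. destruct (aP =? a) eqn:E2; auto.
        apply Nat.eqb_eq in E2. lia.
Qed.

Lemma union {X A} (L : list X) (B : X -> A -> bool) T :
  cnt (fun f => existsb (fun p => B p f) L) T <= sumf (fun p => cnt (B p) T) L.
Proof. induction L; simpl.
  - unfold cnt. clear. induction T; simpl; auto.
  - pose proof (cnt_or (B a) (fun f => existsb (fun p => B p f) L) T). lia. Qed.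

Lemma sumf_app {A} (h : A -> nat) l1 l2 : sumf h (l1 ++ l2) = sumf h l1 + sumf h l2.
Proof. induction l1; simpl; lia. Qed.
Lemma sumf_map {A B} (h : B -> nat) (g : A -> B) l : sumf h (map g l) = sumf (fun x => h (g x)) l.
Proof. induction l; simpl; lia. Qed.

Lemma pick {X A} (L : list X) (B : X -> A -> bool) T :
  sumf (fun p => cnt (B p) T) L < length T ->
  exists f, In f T /\ forall p, In p L -> B p f = false.
Proof. intros H. pose proof (union L B T).
  pose proof (filter_length (fun f => existsb (fun p => B p f) L) T).
  unfold cnt in *.
  destruct (filter (fun x => negb (existsb (fun p => B p x) L)) T) as [|f l] eqn:E.
  - simpl in H1. lia.
  - assert (Hf : In f (filter (fun x => negb (existsb (fun p => B p x) L)) T)) by (rewrite E; left; auto).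
    apply filter_In in Hf as [Hf Hn]. exists f; split; auto.
    intros p Hp. destruct (B p f) eqn:E2; auto.
    assert (existsb (fun p => B p f) L = true) by (apply existsb_exists; eauto).
    rewrite H2 in Hn; discriminate.
Qed.

Lemma sumf_mul_le {A} (h : A -> nat) c d l : (forall x, h x * c <= d) -> sumf h l * c <= length l * d.
Proof. intros H; induction l; simpl; auto. specialize (H a). nia. Qed.

Definition Bsum (K : nat) (x : ((nat*nat)*(nat*nat)) + (nat*nat)) (f : list (nat*nat)) : bool :=
  match x with
  | inl (P,Q) => K <=? cnt (TT P Q) f
  | inr P => 2 <=? cnt (eqp P) f
  end.

Lemma exists_good N K : 1 <= N ->
  2 * ((2*N+1)*(2*N+1))^2 * 65^K <= fact K ->
  exists f, In f (tuples (Gr (2*N+1)) N) /\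
    (forall P Q, In P (Gr (2*N+1)) -> In Q (Gr (2*N+1)) -> cnt (TT P Q) f < K) /\
    (forall P, In P (Gr (2*N+1)) -> cnt (eqp P) f < 2).
Proof.
  intros HN HK. set (n := 2*N+1) in *. set (G := Gr n).
  assert (Hg : length G = n*n) by (unfold G, Gr; rewrite length_prod, length_seq; auto).
  set (g := n*n) in *.
  set (L := map inl (list_prod G G) ++ map inr G).
  destruct (pick L (Bsum K) (tuples G N)) as [f [Hf HB]].
  - rewrite tuples_length, Hg. unfold L. rewrite sumf_app, !sumf_map.
    assert (HF : 0 < fact K) by apply lt_O_fact.
    assert (Hg0 : 0 < g) by (unfold g, n; nia).
    assert (HgN : 0 < g^N) by (apply Nat.neq_0_lt_0, Nat.pow_nonzero; lia).
    assert (H1 : forall PQ, cnt (Bsum K (inl PQ)) (tuples G N) * fact K <= 65^K * g^N).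
    { intros [P Q]. simpl. pose proof (key G (TT P Q) N K) as Hk. fold (Bad G (TT P Q) N K).
      rewrite Hg in Hk. pose proof (TT_cnt P Q n) as Ht. fold G in Ht.
      assert (Hp : N^K * cnt (TT P Q) G ^ K <= 65^K * g^K).
      { rewrite <- !Nat.pow_mul_l. apply Nat.pow_le_mono_l. unfold g, n in *. nia. }
      assert (HgK : 0 < g^K) by (apply Nat.neq_0_lt_0, Nat.pow_nonzero; lia).
      set (B := Bad G (TT P Q) N K) in *. 
      assert (B * fact K * g^K <= 65^K * g^N * g^K) by nia.
      apply Nat.mul_le_mono_pos_r in H; auto. }
    assert (H1s : sumf (fun x => cnt (Bsum K (inl x)) (tuples G N)) (list_prod G G) * fact K
                  <= g*g * (65^K * g^N)).
    { replace (g*g) with (length (list_prod G G)) by (rewrite length_prod, Hg; auto).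
      apply sumf_mul_le. auto. }
    assert (H2 : forall P, cnt (Bsum K (inr P)) (tuples G N) * 2 * (g * g) <= N*N * g^N).
    { intros P. simpl.
      pose proof (key G (eqp P) N 2) as Hk'. fold (Bad G (eqp P) N 2).
      rewrite Hg in Hk'. pose proof (eqp_cnt P n) as He. fold G in He.
      simpl in Hk'. set (B := Bad G (eqp P) N 2) in *. set (c := cnt (eqp P) G) in *.
      assert (c * (c*1) <= 1) by nia.
      change (cnt (Bsum K (inr P)) (tuples G N)) with B.
      assert (N * (N * 1) * (c * (c * 1)) * g ^ N <= N*N*g^N).
      { replace (N*N*g^N) with (N * (N * 1) * 1 * g ^ N) by ring.
        apply Nat.mul_le_mono_r, Nat.mul_le_mono_l; auto. }
      replace (B * 2 * (g*g)) with (B * (g * (g * 1)) * 2) by ring. lia. }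
    assert (H2s : sumf (fun x => cnt (Bsum K (inr x)) (tuples G N)) G * 2 * (g*g) <= g * (N*N*g^N)).
    { replace (g * (N*N*g^N)) with (length G * (N*N*g^N)) by (rewrite Hg; auto).
      replace (sumf (fun x => cnt (Bsum K (inr x)) (tuples G N)) G * 2 * (g*g)) with
        (sumf (fun x => cnt (Bsum K (inr x)) (tuples G N)) G * (2 * (g*g))) by ring.
      apply sumf_mul_le. intros x. rewrite Nat.mul_assoc. auto. }
    set (s1 := sumf (fun x => cnt (Bsum K (inl x)) (tuples G N)) (list_prod G G)) in *.
    set (s2 := sumf (fun x => cnt (Bsum K (inr x)) (tuples G N)) G) in *.
    assert (A1 : 2 * s1 <= g^N).
    { assert (2 * s1 * fact K <= g^N * fact K).
      { apply Nat.le_trans with (2 * (g*g) * 65^K * g^N). nia.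
        replace (2 * (g*g) * 65^K * g^N) with (2 * g^2 * 65^K * g^N) by (simpl; ring). nia. }
      apply Nat.mul_le_mono_pos_r in H; auto. }
    assert (A2 : 8 * s2 <= g^N).
    { assert (Hg4 : 4*(N*N) <= g) by (unfold g, n; nia).
      assert (s2 * 2 * (g*g) <= g * (N*N*g^N)) by exact H2s.
      assert (s2 * 2 * g <= N*N*g^N) by nia.
      assert (s2 * 8 * (N*N) <= N*N*g^N) by nia.
      assert (0 < N*N) by nia. nia. }
    lia.
  - exists f. apply tuples_in in Hf as Hf'. split; auto. split.
    + intros P Q HP HQ. specialize (HB (inl (P,Q))). simpl in HB.
      assert (In (inl (P,Q)) L) by (unfold L; apply in_or_app; left; apply in_map, in_prod; auto).
      specialize (HB H). apply Nat.leb_gt in HB. auto.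
    + intros P HP. specialize (HB (inr P)).
      assert (In (inr P) L) by (unfold L; apply in_or_app; right; apply in_map; auto).
      specialize (HB H). unfold Bsum in HB. apply Nat.leb_gt in HB. auto.
Qed.
End CombM.
Import CombM.


Definition ell (N : nat) (w1 w2 w3 : R) (a b : nat) : R :=
  w1 * INR N + w2 * (INR a - INR N) + w3 * (INR b - INR N).

Lemma w3_big N w1 w2 w3 a b : (9 <= N)%nat -> w1*w1 + w2*w2 + w3*w3 = 1 -> Rabs w2 <= Rabs w3 ->
  (a <= 2*N)%nat -> (b <= 2*N)%nat -> Rabs (ell N w1 w2 w3 a b) <= 2 -> 1/4 <= Rabs w3.
Proof. intros HN Hs H23 Ha Hb Hl.
  apply le_INR in HN, Ha, Hb. rewrite mult_INR in Ha, Hb. simpl in HN, Ha, Hb.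
  destruct (Rle_lt_dec (1/4) (Rabs w3)) as [h|h]; auto. exfalso.
  unfold ell in Hl. set (n := INR N) in *. set (x := INR a - n) in *. set (y := INR b - n) in *.
  assert (Hx : Rabs x <= n) by (pose proof (pos_INR a); unfold x; apply Rabs_le; split; lra).
  assert (Hy : Rabs y <= n) by (pose proof (pos_INR b); unfold y; apply Rabs_le; split; lra).
  assert (E2 : w2*w2 = Rabs w2 * Rabs w2) by (rewrite <- Rabs_mult; rewrite Rabs_right; nra).
  assert (E3 : w3*w3 = Rabs w3 * Rabs w3) by (rewrite <- Rabs_mult; rewrite Rabs_right; nra).
  assert (E1 : w1*w1 = Rabs w1 * Rabs w1) by (rewrite <- Rabs_mult; rewrite Rabs_right; nra).
  pose proof (Rabs_pos w1). pose proof (Rabs_pos w2). pose proof (Rabs_pos w3).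
  assert (Hw1 : 3/4 < Rabs w1) by nra.
  assert (Rabs (w2*x) <= n/4) by (rewrite Rabs_mult; pose proof (Rabs_pos w2); pose proof (Rabs_pos x); nra).
  assert (Rabs (w3*y) <= n/4) by (rewrite Rabs_mult; pose proof (Rabs_pos w3); pose proof (Rabs_pos x); pose proof (Rabs_pos y); nra).
  assert (Rabs (w1*n) > 3/4*n) by (rewrite Rabs_mult, (Rabs_right n) by lra; nra).
  pose proof (Rabs_triang_inv (w1*n) (w2*x + w3*y)).
  pose proof (Rabs_triang (w2*x) (w3*y)).
  replace (w1 * n + w2 * x + w3 * y) with (w1*n + (w2*x + w3*y)) in Hl by ring.
  pose proof (Rabs_triang (w1*n + (w2*x+w3*y)) (-(w2*x+w3*y))) as H8.
  rewrite Rabs_Ropp in H8.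
  replace (w1 * n + (w2 * x + w3 * y) + - (w2 * x + w3 * y)) with (w1*n) in H8 by ring.
  lra.
Qed.

Lemma core N w1 w2 w3 aP bP aQ bQ aR bR : (9 <= N)%nat -> w1*w1 + w2*w2 + w3*w3 = 1 ->
  Rabs w2 <= Rabs w3 -> (aR <= 2*N)%nat -> (bR <= 2*N)%nat ->
  Rabs (ell N w1 w2 w3 aP bP) <= 2 -> Rabs (ell N w1 w2 w3 aQ bQ) <= 2 ->
  Rabs (ell N w1 w2 w3 aR bR) <= 2 -> (aP <= aR)%nat -> (aR <= aQ)%nat ->
  Ta (aP,bP) (aQ,bQ) (aR,bR) = true.
Proof. intros HN Hs H23 Ha Hb HP HQ HR H1 H2.
  pose proof (w3_big N w1 w2 w3 aR bR HN Hs H23 Ha Hb HR) as Hw.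
  apply Nat.leb_le in H1 as H1', H2 as H2'.
  apply le_INR in H1, H2.
  assert (Hid : w3 * ((INR aR - INR aP)*(INR bQ - INR bP) - (INR bR - INR bP)*(INR aQ - INR aP))
     = (INR aR - INR aP) * (ell N w1 w2 w3 aQ bQ - ell N w1 w2 w3 aP bP)
       - (ell N w1 w2 w3 aR bR - ell N w1 w2 w3 aP bP) * (INR aQ - INR aP)) by (unfold ell; ring).
  set (cr := (INR aR - INR aP)*(INR bQ - INR bP) - (INR bR - INR bP)*(INR aQ - INR aP)) in *.
  assert (Hc : Rabs cr <= 32 * (INR aQ - INR aP)).
  { set (lP := ell N w1 w2 w3 aP bP) in *. set (lQ := ell N w1 w2 w3 aQ bQ) in *.
    set (lR := ell N w1 w2 w3 aR bR) in *.
    assert (Rabs (w3 * cr) <= 8 * (INR aQ - INR aP)).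
    { rewrite Hid. eapply Rle_trans. apply Rabs_triang. rewrite Rabs_Ropp, !Rabs_mult.
      rewrite (Rabs_right (INR aR - INR aP)) by lra. rewrite (Rabs_right (INR aQ - INR aP)) by lra.
      assert (Rabs (lQ - lP) <= 4). { eapply Rle_trans. apply Rabs_triang. rewrite Rabs_Ropp. lra. }
      assert (Rabs (lR - lP) <= 4). { eapply Rle_trans. apply Rabs_triang. rewrite Rabs_Ropp. lra. }
      nra. }
    rewrite Rabs_mult in H. pose proof (Rabs_pos cr). nra. }
  assert (HZ : (Z.abs ((zn aR - zn aP)*(zn bQ - zn bP) - (zn bR - zn bP)*(zn aQ - zn aP)) <= 32*(zn aQ - zn aP))%Z).
  { apply le_IZR. rewrite abs_IZR. unfold zn.
    repeat (rewrite mult_IZR || rewrite minus_IZR). rewrite <- !INR_IZR_INZ. exact Hc. }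
  unfold Ta at 1. rewrite H1', H2'. simpl andb.
  apply andb_true_intro; split.
  - apply Z.leb_le. exact HZ.
  - destruct (aQ =? aP)%nat eqn:E; auto. apply Nat.eqb_eq in E. subst aQ.
    apply Nat.leb_le in H1', H2'. assert (aR = aP) by lia. subst aR.
    assert (Hd : ell N w1 w2 w3 aP bR - ell N w1 w2 w3 aP bP = w3 * (INR bR - INR bP)) by (unfold ell; ring).
    assert (Rabs (w3 * (INR bR - INR bP)) <= 4).
    { rewrite <- Hd. eapply Rle_trans. apply Rabs_triang. rewrite Rabs_Ropp. lra. }
    rewrite Rabs_mult in H. pose proof (Rabs_pos (INR bR - INR bP)).
    apply Z.leb_le. apply le_IZR. rewrite abs_IZR. unfold zn. rewrite minus_IZR, <- !INR_IZR_INZ. nra.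
Qed.

Lemma sqn (r : R) : 0 <= r * r.
Proof. apply Rle_0_sqr. Qed.

Definition rho (N : nat) (P : nat * nat) : R :=
  sqrt (INR N * INR N + (INR (fst P) - INR N) * (INR (fst P) - INR N) + (INR (snd P) - INR N) * (INR (snd P) - INR N)).

Definition emb (N : nat) (P : nat * nat) : R3 :=
  (INR N / rho N P, (INR (fst P) - INR N) / rho N P, (INR (snd P) - INR N) / rho N P).

Lemma rho_pos N P : (1 <= N)%nat -> 0 < rho N P.
Proof. intros H. apply le_INR in H. simpl in H. unfold rho. apply sqrt_lt_R0. pose proof (sqn (INR (fst P) - INR N)). pose proof (sqn (INR (snd P) - INR N)). nra. Qed.

Lemma rho_sq N P : rho N P * rho N P = INR N * INR N + (INR (fst P) - INR N) * (INR (fst P) - INR N) + (INR (snd P) - INR N) * (INR (snd P) - INR N).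
Proof. unfold rho. apply sqrt_sqrt. pose proof (sqn (INR N)). pose proof (sqn (INR (fst P) - INR N)). pose proof (sqn (INR (snd P) - INR N)). lra. Qed.

Lemma emb_sphere N P : (1 <= N)%nat -> on_sphere (emb N P).
Proof. intros H. pose proof (rho_pos N P H). pose proof (rho_sq N P).
  unfold on_sphere, emb, dot3. rewrite <- sqrt_1. f_equal.
  replace 1 with ((rho N P * rho N P) / (rho N P * rho N P)) by (field; lra). rewrite H1 at 1. field. lra. Qed.

Lemma emb_inj N P Q : (1 <= N)%nat -> emb N P = emb N Q -> P = Q.
Proof. intros H E. pose proof (rho_pos N P H). pose proof (rho_pos N Q H).
  unfold emb in E. injection E as E1 E2 E3.
  assert (HN : 0 < INR N) by (apply le_INR in H; simpl in H; lra).
  assert (rho N P = rho N Q).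
  { apply (f_equal Rinv) in E1. rewrite !Rinv_div in E1.
    apply (Rmult_eq_reg_r (/ INR N)); [| apply Rinv_neq_0_compat; lra].
    unfold Rdiv in E1. auto. }
  rewrite H2 in E2, E3.
  assert (INR (fst P) = INR (fst Q)).
  { apply (Rmult_eq_compat_r (rho N Q)) in E2. field_simplify in E2; lra. }
  assert (INR (snd P) = INR (snd Q)).
  { apply (Rmult_eq_compat_r (rho N Q)) in E3. field_simplify in E3; lra. }
  apply INR_eq in H3, H4. destruct P, Q; simpl in *; subst; auto. Qed.

Lemma rho_le N P : (1 <= N)%nat -> (fst P <= 2*N)%nat -> (snd P <= 2*N)%nat -> rho N P <= 2 * INR N.
Proof. intros H Ha Hb. apply le_INR in Ha, Hb. rewrite mult_INR in Ha, Hb. simpl in Ha, Hb.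
  pose proof (pos_INR (fst P)). pose proof (pos_INR (snd P)). pose proof (pos_INR N).
  unfold rho. rewrite <- (sqrt_square (2 * INR N)) by lra. apply sqrt_le_1_alt. nra. Qed.

Lemma strip_ell N v1 v2 v3 P : (1 <= N)%nat -> (fst P <= 2*N)%nat -> (snd P <= 2*N)%nat ->
  Rabs (dot3 (v1,v2,v3) (emb N P)) <= / INR N ->
  Rabs (ell N v1 v2 v3 (fst P) (snd P)) <= 2.
Proof. intros H Ha Hb Hs. pose proof (rho_pos N P H). pose proof (rho_le N P H Ha Hb).
  assert (HN : 0 < INR N) by (apply le_INR in H; simpl in H; lra).
  assert (dot3 (v1,v2,v3) (emb N P) = ell N v1 v2 v3 (fst P) (snd P) / rho N P).
  { unfold dot3, emb, ell. field. lra. }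
  rewrite H2 in Hs. unfold Rdiv in Hs. rewrite Rabs_mult, (Rabs_right (/ rho N P)) in Hs.
  2:{ apply Rle_ge, Rlt_le, Rinv_0_lt_compat; lra. }
  apply (Rmult_le_compat_r (rho N P)) in Hs; [|lra].
  rewrite Rmult_assoc, Rinv_l, Rmult_1_r in Hs by lra.
  apply Rle_trans with (/ INR N * rho N P); auto.
  apply Rle_trans with (/ INR N * (2 * INR N)).
  - apply Rmult_le_compat_l; auto. apply Rlt_le, Rinv_0_lt_compat; lra.
  - right. field. lra.
Qed.

Lemma argmin (l : list nat) (h : nat -> nat) : l <> [] ->
  exists p, In p l /\ forall i, In i l -> (h p <= h i)%nat.
Proof. induction l as [|x l IH]; intros H; [congruence|].
  destruct l as [|y l'].
  - exists x. split; [left; auto|]. intros i [<-|[]]; lia.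
  - destruct IH as [p [Hp Hm]]; [congruence|].
    destruct (Nat.le_gt_cases (h x) (h p)).
    + exists x. split; [left; auto|]. intros i [<-|Hi]; [lia|]. specialize (Hm i Hi); lia.
    + exists p. split; [right; auto|]. intros i [<-|Hi]; [lia|]. auto.
Qed.

Lemma argmax (l : list nat) (h : nat -> nat) : l <> [] ->
  exists p, In p l /\ forall i, In i l -> (h i <= h p)%nat.
Proof. induction l as [|x l IH]; intros H; [congruence|].
  destruct l as [|y l'].
  - exists x. split; [left; auto|]. intros i [<-|[]]; lia.
  - destruct IH as [p [Hp Hm]]; [congruence|].
    destruct (Nat.le_gt_cases (h p) (h x)).
    + exists x. split; [left; auto|]. intros i [<-|Hi]; [lia|]. specialize (Hm i Hi); lia.
    + exists p. split; [right; auto|]. intros i [<-|Hi]; [lia|]. auto.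
Qed.

Lemma filter_mono {A} (p q : A -> bool) l : (forall x, In x l -> p x = true -> q x = true) ->
  (length (filter p l) <= length (filter q l))%nat.
Proof. induction l; simpl; intros H; auto.
  destruct (p a) eqn:E1.
  - rewrite (H a (or_introl eq_refl) E1). simpl. apply le_n_S, IHl; auto.
  - destruct (q a); simpl; [apply le_S|]; apply IHl; auto. Qed.

Lemma map_nth_seq' {A} (d : A) f : map (fun i => nth i f d) (seq 0 (length f)) = f.
Proof. induction f; simpl; auto. f_equal. rewrite <- seq_shift, map_map. simpl. auto. Qed.

Lemma index_cnt {A} (q : A -> bool) (d : A) f :
  length (filter (fun i => q (nth i f d)) (seq 0 (length f))) = cnt q f.
Proof. change (length (filter (fun i => q (nth i f d)) (seq 0 (length f)))) with
    (cnt (fun i => q (nth i f d)) (seq 0 (length f))).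
  rewrite <- (cnt_map q (fun i => nth i f d)). rewrite map_nth_seq'. auto. Qed.

Lemma unit_v v1 v2 v3 : on_sphere (v1,v2,v3) -> v1*v1 + v2*v2 + v3*v3 = 1.
Proof. unfold on_sphere, dot3. intros H.
  assert (0 <= v1*v1 + v2*v2 + v3*v3) by (pose proof (sqn v1); pose proof (sqn v2); pose proof (sqn v3); lra).
  rewrite <- (sqrt_sqrt _ H0), H. ring. Qed.

Lemma strip_bound N K (f : list (nat*nat)) v : (9 <= N)%nat ->
  length f = N -> (forall y, In y f -> In y (Gr (2*N+1))) ->
  (forall P Q, In P (Gr (2*N+1)) -> In Q (Gr (2*N+1)) -> (cnt (TT P Q) f < K)%nat) ->
  on_sphere v -> (strip_count N (fun i => emb N (nth i f (0,0)%nat)) v < K)%nat.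
Proof.
  intros HN Hl HG HT Hv. destruct v as [[v1 v2] v3]. apply unit_v in Hv.
  unfold strip_count.
  set (sb := fun i => if Rle_dec (Rabs (dot3 (v1,v2,v3) (emb N (nth i f (0,0)%nat)))) (/ INR N) then true else false).
  assert (H0G : In (0,0)%nat (Gr (2*N+1))) by (apply in_prod; apply in_seq; lia).
  assert (HK : (0 < K)%nat) by (specialize (HT _ _ H0G H0G); lia).
  destruct (filter sb (seq 0 N)) as [|i0 l0] eqn:EI; [simpl; lia|].
  set (I := i0 :: l0) in *. assert (HIn : I <> []) by (unfold I; congruence).
  assert (Hpt : forall i, In i I -> (i < N)%nat /\ (fst (nth i f (0,0)%nat) <= 2*N)%nat /\
     (snd (nth i f (0,0)%nat) <= 2*N)%nat /\
     Rabs (ell N v1 v2 v3 (fst (nth i f (0,0)%nat)) (snd (nth i f (0,0)%nat))) <= 2).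
  { intros i Hi. rewrite <- EI in Hi. apply filter_In in Hi as [Hi Hs].
    apply in_seq in Hi. 
    assert (HnG : In (nth i f (0,0)%nat) (Gr (2*N+1))) by (apply HG, nth_In; lia).
    destruct (nth i f (0,0)%nat) as [a b] eqn:E. unfold Gr in HnG. apply in_prod_iff in HnG as [Ha Hb].
    apply in_seq in Ha, Hb. simpl. repeat split; try lia.
    unfold sb in Hs. rewrite E in Hs. destruct Rle_dec as [Hr|]; [|discriminate].
    apply (strip_ell N v1 v2 v3 (a,b)); simpl; auto; lia. }
  assert (Hmem : forall i, In i I -> In (nth i f (0,0)%nat) (Gr (2*N+1))).
  { intros i Hi. apply HG, nth_In. destruct (Hpt i Hi); lia. }
  assert (Hcnt : forall P Q, In P (Gr (2*N+1)) -> In Q (Gr (2*N+1)) ->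
     (forall i, In i I -> TT P Q (nth i f (0,0)%nat) = true) -> (length I <= cnt (TT P Q) f)%nat).
  { intros P Q _ _ H. rewrite <- (index_cnt _ (0,0)%nat f), Hl. rewrite <- EI.
    apply filter_mono. intros x Hx Hs. apply H. rewrite <- EI. apply filter_In; auto. }
  destruct (Rle_lt_dec (Rabs v2) (Rabs v3)) as [H23|H23].
  - destruct (argmin I (fun i => fst (nth i f (0,0)%nat)) HIn) as [p [Hp Hpm]].
    destruct (argmax I (fun i => fst (nth i f (0,0)%nat)) HIn) as [q [Hq Hqm]].
    assert (length I <= cnt (TT (nth p f (0,0)%nat) (nth q f (0,0)%nat)) f)%nat.
    { apply Hcnt; auto. intros i Hi. unfold TT. apply orb_true_intro; left.
      destruct (Hpt p Hp) as [_ [_ [_ HP]]]. destruct (Hpt q Hq) as [_ [_ [_ HQ]]].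
      destruct (Hpt i Hi) as [_ [Ha [Hb HR]]].
      specialize (Hpm i Hi). specialize (Hqm i Hi).
      destruct (nth p f (0,0)%nat) as [aP bP], (nth q f (0,0)%nat) as [aQ bQ], (nth i f (0,0)%nat) as [aR bR].
      simpl in *. apply (core N v1 v2 v3); auto. }
    specialize (HT _ _ (Hmem p Hp) (Hmem q Hq)). lia.
  - destruct (argmin I (fun i => snd (nth i f (0,0)%nat)) HIn) as [p [Hp Hpm]].
    destruct (argmax I (fun i => snd (nth i f (0,0)%nat)) HIn) as [q [Hq Hqm]].
    assert (length I <= cnt (TT (nth p f (0,0)%nat) (nth q f (0,0)%nat)) f)%nat.
    { apply Hcnt; auto. intros i Hi. unfold TT. apply orb_true_intro; right.
      destruct (Hpt p Hp) as [_ [_ [_ HP]]]. destruct (Hpt q Hq) as [_ [_ [_ HQ]]].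
      destruct (Hpt i Hi) as [_ [Ha [Hb HR]]].
      specialize (Hpm i Hi). specialize (Hqm i Hi).
      destruct (nth p f (0,0)%nat) as [aP bP], (nth q f (0,0)%nat) as [aQ bQ], (nth i f (0,0)%nat) as [aR bR].
      simpl in *. unfold Tb, swp; simpl.
      assert (Hsw : forall a b, ell N v1 v2 v3 a b = ell N v1 v3 v2 b a) by (intros; unfold ell; ring).
      rewrite Hsw in HP, HQ, HR.
      apply (core N v1 v3 v2); auto; lra. }
    specialize (HT _ _ (Hmem p Hp) (Hmem q Hq)). lia.
Qed.

Lemma ln_le' x y : 0 < x -> x <= y -> ln x <= ln y.
Proof. intros Hx [H|H]. - left; apply ln_increasing; auto. - subst; lra. Qed.

Lemma exp_mono a b : a <= b -> exp a <= exp b.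
Proof. intros [H|H]. - left; apply exp_increasing; auto. - subst; lra. Qed.

Lemma ln_le_xm1 x : 0 < x -> ln x <= x - 1.
Proof. intros Hx. pose proof (exp_ineq1_le (x - 1)).
  rewrite <- (ln_exp (x-1)). apply ln_le'; auto; lra. Qed.

Lemma ln_half u : 0 < u -> ln u <= u / 2.
Proof. intros Hu. pose proof (sqrt_lt_R0 u Hu) as Hs. pose proof (sqrt_sqrt u (Rlt_le _ _ Hu)) as Hss.
  assert (ln u = 2 * ln (sqrt u)) by (rewrite <- Hss at 1; rewrite ln_mult; auto; ring).
  pose proof (ln_le_xm1 _ Hs). pose proof (Rle_0_sqr (sqrt u - 2)). unfold Rsqr in *. nra. Qed.

Lemma fact_lb k : (INR k / 3) ^ k <= INR (fact k).
Proof. induction k.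
  - simpl; lra.
  - change (fact (S k)) with (S k * fact k)%nat. rewrite mult_INR, S_INR.
    pose proof (pos_INR k) as Hk.
    assert (Hb : (INR k + 1) ^ k <= 3 * INR k ^ k).
    { destruct k. - simpl; lra.
      - set (x := INR (S k)) in *. assert (Hx : 0 < x) by (unfold x; rewrite S_INR; pose proof (pos_INR k); lra).
        assert (E : (x + 1) ^ (S k) = x ^ (S k) * (1 + /x) ^ (S k)).
        { rewrite <- Rpow_mult_distr. f_equal. field. lra. }
        assert (H1 : (1 + /x) ^ (S k) <= exp 1).
        { assert (0 < 1 + /x) by (pose proof (Rinv_0_lt_compat x Hx); lra).
          rewrite <- (exp_ln ((1 + /x) ^ S k)) by (apply pow_lt; auto).
          apply exp_mono. rewrite ln_pow by auto. fold x.
          pose proof (ln_le_xm1 (1 + /x) H).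
          assert (x * ln (1 + /x) <= x * /x) by (apply Rmult_le_compat_l; lra).
          rewrite Rinv_r in H1 by lra. auto. }
        rewrite E. pose proof exp_le_3. pose proof (pow_lt x (S k) Hx). nra. }
    assert (E1 : ((INR k + 1) / 3) ^ S k = (INR k + 1) / 3 * ((INR k + 1) ^ k * (/3) ^ k)).
    { simpl. rewrite <- Rpow_mult_distr. reflexivity. }
    assert (E2 : (INR k / 3) ^ k = INR k ^ k * (/3)^k) by (rewrite <- Rpow_mult_distr; reflexivity).
    rewrite E1. rewrite E2 in IHk.
    assert (0 < (/3)^k) by (apply pow_lt; lra).
    assert ((INR k + 1) ^ k * (/3)^k <= 3 * (INR k ^ k * (/3)^k)) by nra.
    nra.
Qed.

Definition Kof (N : nat) : nat := Z.to_nat (up (195 * (ln (INR N) / ln (ln (INR N))))).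

Lemma asym N : (16 <= N)%nat ->
  (2 * ((2*N+1)*(2*N+1))^2 * 65^(Kof N) <= fact (Kof N))%nat /\
  INR (Kof N) - 1 <= 195 * (ln (INR N) / ln (ln (INR N))).
Proof.
  intros HN. apply le_INR in HN. set (n := INR N) in *.
  assert (Hn : 16 <= n) by (replace 16 with (INR 16) by (simpl; lra); exact HN).
  set (l1 := ln n). set (l2 := ln l1).
  assert (Hl1 : 1 < l1).
  { unfold l1. rewrite <- (ln_exp 1). apply ln_increasing. apply exp_pos. pose proof exp_le_3; lra. }
  assert (Hl2 : 0 < l2) by (unfold l2; rewrite <- ln_1; apply ln_increasing; lra).
  set (L := l1 / l2). assert (HL : 0 < L) by (unfold L; apply Rdiv_lt_0_compat; lra).
  set (r := 195 * L). assert (Hr : 0 < r) by (unfold r; lra).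
  destruct (archimed r) as [Hu1 Hu2].
  assert (Hup : (0 < up r)%Z) by (apply lt_IZR; change (IZR 0) with 0; lra).
  assert (HK : INR (Kof N) = IZR (up r)).
  { unfold Kof. fold n l1. fold l2 L r. rewrite INR_IZR_INZ. f_equal. apply Z2Nat.id. lia. }
  set (K := Kof N) in *. set (kk := INR K) in *.
  split; [|unfold r, L in *; lra].
  assert (HlL : l2 / 2 <= ln L).
  { unfold L. unfold Rdiv. rewrite ln_mult, ln_Rinv by (try apply Rinv_0_lt_compat; lra).
    pose proof (ln_half l2 Hl2). fold l2. lra. }
  assert (Hkk : 0 < kk / 195) by lra.
  assert (Hlk : l2 / 2 <= ln (kk / 195)).
  { eapply Rle_trans; [exact HlL|]. apply ln_le'; auto. assert (r = 195 * L) by reflexivity. lra. }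
  assert (HA : 195 / 2 * l1 <= kk * ln (kk / 195)).
  { apply Rle_trans with (r * (l2/2)).
    - right. unfold r, L. field. lra.
    - apply Rmult_le_compat; lra. }
  assert (Hln2 : ln 2 <= 1) by (pose proof (ln_le_xm1 2 ltac:(lra)); lra).
  assert (Hln3 : ln 3 <= 2) by (pose proof (ln_le_xm1 3 ltac:(lra)); lra).
  assert (Hlhs : ln (2 * ((2*n+1)*(2*n+1))^2) <= kk * ln (kk/195)).
  { rewrite ln_mult by (try apply pow_lt; nra).
    rewrite ln_pow, ln_mult by nra.
    assert (ln (2*n+1) <= ln 3 + l1).
    { unfold l1. rewrite <- ln_mult by lra. apply ln_le'; lra. }
    simpl INR. lra. }
  assert (Hpow : 2 * ((2*n+1)*(2*n+1))^2 <= (kk/195)^K).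
  { rewrite <- (exp_ln (2 * ((2*n+1)*(2*n+1))^2)) by (apply Rmult_lt_0_compat; [lra| apply pow_lt; nra]).
    rewrite <- (exp_ln ((kk/195)^K)) by (apply pow_lt; auto).
    apply exp_mono. rewrite ln_pow by auto. exact Hlhs. }
  apply INR_le. rewrite !mult_INR, !pow_INR, !mult_INR, !plus_INR, mult_INR. fold n.
  replace (INR 2) with 2 by reflexivity. replace (INR 1) with 1 by reflexivity.
  replace (INR 65) with 65 by (simpl; lra).
  eapply Rle_trans; [| apply fact_lb]. fold kk.
  replace (kk / 3) with (kk / 195 * 65) by field.
  rewrite (Rpow_mult_distr (kk/195) 65 K). apply Rmult_le_compat_r; [apply pow_le; lra | exact Hpow].
Qed.

Lemma nodup_of_eqp (f : list (nat*nat)) (G : list (nat*nat)) :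
  (forall y, In y f -> In y G) -> (forall P, In P G -> (cnt (eqp P) f < 2)%nat) -> NoDup f.
Proof.
  induction f as [|x f IH]; intros HG HE; constructor.
  - intros Hx. specialize (HE x (HG x (or_introl eq_refl))).
    unfold cnt in HE. simpl in HE. unfold eqp in HE at 1. rewrite !Nat.eqb_refl in HE. simpl in HE.
    assert (In x (filter (eqp x) f)) by (apply filter_In; split; auto; unfold eqp; rewrite !Nat.eqb_refl; auto).
    destruct (filter (eqp x) f); [inversion H|]. simpl in HE. lia.
  - apply IH. + intros y Hy; apply HG; right; auto.
    + intros P HP. specialize (HE P HP). unfold cnt in *. simpl in HE. destruct (eqp P x); simpl in HE; lia.
Qed.

Theorem mainTheorem12 :
  exists c : R, exists N0 : nat,
    forall N : nat, (N0 <= N)%nat ->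
      exists x : nat -> R3,
        (forall i, (i < N)%nat -> on_sphere (x i)) /\
        (forall i j, (i < N)%nat -> (j < N)%nat -> x i = x j -> i = j) /\
        (forall v : R3, on_sphere v ->
           INR (strip_count N x v) <= c * (ln (INR N) / ln (ln (INR N)))).
Proof.
  exists 195, 16%nat. intros N HN.
  destruct (asym N HN) as [HK HKr].
  destruct (exists_good N (Kof N) ltac:(lia) HK) as [f [Hf [HT HE]]].
  apply tuples_in in Hf as [Hl HG].
  exists (fun i => emb N (nth i f (0,0)%nat)). split; [|split].
  - intros i _. apply emb_sphere. lia.
  - intros i j Hi Hj E. apply emb_inj in E; [|lia].
    pose proof (nodup_of_eqp f _ HG HE) as ND.
    apply (proj1 (NoDup_nth f (0,0)%nat) ND); auto; lia.
  - intros v Hv. pose proof (strip_bound N (Kof N) f v ltac:(lia) Hl HG HT Hv) as Hs.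
    apply le_INR in Hs. rewrite S_INR in Hs. lra.
Qed.
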